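(* Let $\mathcal{M}\subseteq\mathbb{R}^d$ be a compact embedded $C^2$-submanifold without boundary with reach $\tau_{\mathcal{M}}>0$, let $\tau\in(0,\tau_{\mathcal{M}})$ and $\eta>0$. Then $$\inf_{x\in\mathcal{T}(\tau)}\Big(\tfrac12\operatorname{dist}_{\mathcal{M}\setminus B_\eta(\pi(x))}(x)^2-\tfrac12\operatorname{dist}_{\mathcal{M}}(x)^2\Big)\ge\frac12\,\frac{\tau_{\mathcal{M}}-\tau}{\tau_{\mathcal{M}}+\tau}\,\eta^2>0.$$
   Context: Reach $\tau_{\mathcal{M}}$: largest $\tau\ge0$ such that $(p,v)\mapsto p+v$ on $\{(p,v):p\in\mathcal{M},v\in N_p\mathcal{M},\|v\|<\tau\}$ is a diffeomorphism onto its image; $\mathcal{T}(\tau)=\{p+v:p\in\mathcal{M},v\in N_p\mathcal{M},\|v\|<\tau\}$; $\pi(x)$ is the unique closest point of $\mathcal{M}$ to $x\in\mathcal{T}(\tau_{\mathcal{M}})$. For a set $A$, $\operatorname{dist}_A(x)=\inf_{a\in A}\|x-a\|$ (with $\inf\emptyset=+\infty$), and $B_\eta(p)$ is the open Euclidean ball of radius $\eta$ centered at $p$. *)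

(* Defs.v *)
(* R^d is modelled as 'rV[R]_d with the
   Euclidean norm [enorm] defined below (the library's norm on matrices is
   the sup norm, so we do not use it for metric notions; topological notions
   such as [open], [compact], continuity, derivatives coincide). *)
From HB Require Import structures.
From mathcomp Require Import all_boot all_order all_algebra.
From mathcomp Require Import all_classical all_reals all_analysis.
Set Implicit Arguments. Unset Strict Implicit. Unset Printing Implicit Defensive.
Import Order.TTheory GRing.Theory Num.Theory.
Import numFieldNormedType.Exports.
Local Open Scope classical_set_scope.
Local Open Scope ring_scope.

Section Defs.
Variable R : realType.

Definition edot n (u v : 'rV[R]_n) : R := \sum_(i < n) u 0 i * v 0 i.
Definition enorm n (u : 'rV[R]_n) : R := Num.sqrt (edot u u).

Definition evec n (i : 'I_n) : 'rV[R]_n := delta_mx 0 i.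
Definition partial n m (f : 'rV[R]_n -> 'rV[R]_m) (i : 'I_n) (x : 'rV[R]_n)
  : 'rV[R]_m := derive f x (evec i).

Definition C1_on n m (U : set 'rV[R]_n) (f : 'rV[R]_n -> 'rV[R]_m) : Prop :=
  (forall x, U x -> {for x, continuous f}) /\
  (forall i x, U x -> derivable f x (evec i)) /\
  (forall i x, U x -> {for x, continuous (partial f i)}).
Definition C2_on n m (U : set 'rV[R]_n) (f : 'rV[R]_n -> 'rV[R]_m) : Prop :=
  C1_on U f /\ forall i, C1_on U (partial f i).

Definition jacobian n m (f : 'rV[R]_n -> 'rV[R]_m) (x : 'rV[R]_n) : 'M[R]_(n, m) :=
  \matrix_(i < n, j < m) partial f i x 0 j.

(* M is an embedded C^2 submanifold (without boundary) of R^d of dimension k: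
   locally the regular zero set of a C^2 map into R^(d-k). *)
Definition C2_submanifold d (k : nat) (M : set 'rV[R]_d) : Prop :=
  forall p, M p -> exists (U : set 'rV[R]_d) (F : 'rV[R]_d -> 'rV[R]_(d - k)),
    [/\ open U, U p, C2_on U F,
        M `&` U = [set x | U x /\ F x = 0] &
        \rank (jacobian F p) = (d - k)%N].

Definition tangent d (M : set 'rV[R]_d) (p v : 'rV[R]_d) : Prop :=
  exists g : R -> 'rV[R]_d,
    [/\ g 0 = p, exists2 e : R, 0 < e & (forall t : R, `|t| < e -> M (g t)),
        derivable g 0 1 & derive g 0 1 = v].

Definition normal d (M : set 'rV[R]_d) (p v : 'rV[R]_d) : Prop :=
  forall w, tangent M p w -> edot v w = 0.

Definition tube d (M : set 'rV[R]_d) (tau : R) : set 'rV[R]_d :=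
  [set x | exists p v, [/\ M p, normal M p v, enorm v < tau & x = p + v]].

(* (p,v) |-> p+v on {(p,v) : p in M, v in N_pM, |v| < tau} is a
   (C^1-)diffeomorphism onto its image: injective, with open image, and the
   inverse x |-> (G x, x - G x) is C^1 on the image. *)
Definition reach_cond d (M : set 'rV[R]_d) (tau : R) : Prop :=
  [/\ forall p v q w, M p -> normal M p v -> enorm v < tau ->
                      M q -> normal M q w -> enorm w < tau ->
                      p + v = q + w -> p = q /\ v = w,
      open (tube M tau) &
      exists G : 'rV[R]_d -> 'rV[R]_d,
        C1_on (tube M tau) G /\
        forall p v, M p -> normal M p v -> enorm v < tau -> G (p + v) = p].

Definition is_reach d (M : set 'rV[R]_d) (tauM : R) : Prop :=
  [/\ 0 <= tauM, reach_cond M tauM &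
      forall t, 0 <= t -> reach_cond M t -> t <= tauM].

(* Euclidean open ball, distance to a set (inf over empty set = +oo) *)
Definition eball d (p : 'rV[R]_d) (eta : R) : set 'rV[R]_d :=
  [set y | enorm (y - p) < eta].
Definition dist_set d (A : set 'rV[R]_d) (x : 'rV[R]_d) : \bar R :=
  ereal_inf [set (enorm (x - a))%:E | a in A].

(* pi(x): the closest point of M to x (unique on T(tau_M)) *)
Definition nearest d (M : set 'rV[R]_d) (x : 'rV[R]_d) : 'rV[R]_d :=
  xget 0 [set p | M p /\ forall q, M q -> enorm (x - p) <= enorm (x - q)].

End Defs.

(* Main.v *)
Require Import Defs.
From HB Require Import structures.
From mathcomp Require Import all_boot all_order all_algebra.
From mathcomp Require Import all_classical all_reals all_analysis.
From mathcomp Require Import ring lra.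
Import Order.TTheory GRing.Theory Num.Theory.
Import numFieldNormedType.Exports.
Local Open Scope classical_set_scope.
Local Open Scope ring_scope.

Section S.
Variable R : realType.
Variable d : nat.
Implicit Types u v w : 'rV[R]_d.

Lemma edot_cvg (T : Type) (F : set_system T) (FF : Filter F) (u v : T -> 'rV[R]_d) a b :
  u @ F --> a -> v @ F --> b -> (fun t => edot (u t) (v t)) @ F --> edot a b.
Proof.
move=> hu hv; rewrite /edot.
apply: (@cvg_big R 'I_d +%R 0 xpredT add_continuous) => i _.
apply: cvgM.
  exact: (continuous_cvg _ (@coord_continuous _ 1 d 0 i a) hu).
exact: (continuous_cvg _ (@coord_continuous _ 1 d 0 i b) hv).
Qed.
Arguments edot_cvg {T F FF u v a b}.

Lemma edotC u v : edot u v = edot v u.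
Proof. by rewrite /edot; apply: eq_bigr => i _; rewrite mulrC. Qed.

Lemma edotDl u v w : edot (u + v) w = edot u w + edot v w.
Proof. by rewrite /edot -big_split; apply: eq_bigr => i _; rewrite mxE mulrDl. Qed.

Lemma edotDr u v w : edot w (u + v) = edot w u + edot w v.
Proof. by rewrite edotC edotDl !(edotC w). Qed.

Lemma edotZl a u v : edot (a *: u) v = a * edot u v.
Proof. by rewrite /edot mulr_sumr; apply: eq_bigr => i _; rewrite mxE mulrA. Qed.

Lemma edotZr a u v : edot v (a *: u) = a * edot v u.
Proof. by rewrite edotC edotZl edotC. Qed.

Lemma edotNl u v : edot (- u) v = - edot u v.
Proof. by rewrite -scaleN1r edotZl mulN1r. Qed.

Lemma edotNr u v : edot v (- u) = - edot v u.
Proof. by rewrite edotC edotNl edotC. Qed.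

Lemma edotBl u v w : edot (u - v) w = edot u w - edot v w.
Proof. by rewrite edotDl edotNl. Qed.

Lemma edotBr u v w : edot w (u - v) = edot w u - edot w v.
Proof. by rewrite edotDr edotNr. Qed.

Lemma edot_ge0 u : 0 <= edot u u.
Proof. by apply: sumr_ge0 => i _; rewrite -expr2 sqr_ge0. Qed.

Lemma edot_eq0 u : edot u u = 0 -> u = 0.
Proof.
move=> h; apply/rowP => i; rewrite mxE.
have hp : forall j : 'I_d, true -> 0 <= u 0 j * u 0 j by move=> j _; rewrite -expr2 sqr_ge0.
have := psumr_eq0P hp h (i:=i) isT.
by rewrite -expr2 => /eqP; rewrite sqrf_eq0 => /eqP.
Qed.

Lemma enorm_sq u : enorm u ^+ 2 = edot u u.
Proof. by rewrite /enorm sqr_sqrtr // edot_ge0. Qed.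

Lemma enorm_ge0 u : 0 <= enorm u.
Proof. exact: sqrtr_ge0. Qed.

Lemma enorm_le u v : (enorm u <= enorm v) = (edot u u <= edot v v).
Proof. by rewrite /enorm ler_sqrt // edot_ge0. Qed.

Lemma enorm_lt_sq u t : 0 < t -> (enorm u < t) = (edot u u < t ^+ 2).
Proof.
move=> t0; rewrite -enorm_sq.
by rewrite ltr_pXn2r // ?nnegrE ?enorm_ge0 ?ltW.
Qed.

Lemma edot_sq2 u v : edot (u + v) (u + v) = edot u u + 2 * edot u v + edot v v.
Proof. by rewrite !edotDl !edotDr (edotC v u); ring. Qed.

Lemma near0_pick (P : R -> Prop) :
  (\forall t \near 0^', P t) -> exists2 r : R, 0 < r & forall t, `|t| < r -> t != 0 -> P t.
Proof.
move=> h; have := h; rewrite /dnbhs /within /= => /nbhs_ballP [r r0 hr].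
exists r => // t tr t0; apply: (hr t) => //.
by rewrite -ball_normE /ball_ /= sub0r normrN.
Qed.

Lemma foc (M : set 'rV[R]_d) (y q : 'rV[R]_d) : M q ->
  (forall q', M q' -> edot (y - q) (y - q) <= edot (y - q') (y - q')) ->
  normal M q (y - q).
Proof.
move=> Mq hmin w [g [g0 [e e0 ge] dg Dg]].
set c := y - q.
pose D := fun t : R => t^-1 *: ((g \o shift 0) (t *: 1) - g 0).
have hD : D @ 0^' --> w by rewrite -Dg; exact: dg.
pose h := fun t : R => t * edot (D t) (D t) - 2 * edot c (D t).
have hh : h @ 0^' --> 0 * edot w w - 2 * edot c w.
  have hid : (fun t : R => t) @ 0^' --> (0:R) by exact: cvg_within.
  have h2 : (fun _ : R => (2:R)) @ 0^' --> (2:R) by exact: cvg_cst.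
  have hc : (fun _ : R => c) @ 0^' --> c by exact: cvg_cst.
  have H := cvgB (cvgM hid (edot_cvg hD hD)) (cvgM h2 (edot_cvg hc hD)).
  exact: H.
have key : forall t, t != 0 -> edot (y - g t) (y - g t) = edot c c + t * h t.
  move=> t t0.
  have -> : y - g t = c + (- t) *: D t.
    rewrite /D /= scalerA mulNr mulrV ?unitfE // scaleN1r.
    rewrite /shift /= addr0 [t%:A]mulr1 g0 /c; by rewrite opprB addrA subrK.
  rewrite /h edot_sq2; move: (D t) => Dt; rewrite !edotZl !edotZr; ring.
have contra : forall t, `|t| < e -> t != 0 -> 0 <= t * h t.
  move=> t te t0; have := hmin _ (ge t te); rewrite key // -/c.
  by rewrite -lerBlDl subrr.
rewrite mul0r sub0r in hh.
have [L0|L0|L0] := ltrgtP (- (2 * edot c w)) 0.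
- have [r r0 hr] := near0_pick _ (cvgr_lt _ hh _ L0).
  pose t := Num.min e r / 2.
  have t0 : 0 < t by rewrite divr_gt0 // lt_min e0 r0.
  have tm : t < Num.min e r by rewrite /t ltr_pdivrMr // ltr_pMr ?lt_min ?e0 ?r0 // ltr1n.
  have := contra t; rewrite gtr0_norm // (lt_le_trans tm) ?ge_min ?lexx // gt_eqF // => /(_ isT isT).
  have := hr t; rewrite gtr0_norm // (lt_le_trans tm) ?ge_min ?lexx ?orbT // gt_eqF // => /(_ isT isT) ht.
  by rewrite pmulr_rge0 // leNgt ht.
- have [r r0 hr] := near0_pick _ (cvgr_gt _ hh _ L0).
  pose t := - (Num.min e r / 2).
  have t0 : t < 0 by rewrite oppr_lt0 divr_gt0 // lt_min e0 r0.
  have tm : - t < Num.min e r by rewrite opprK ltr_pdivrMr // ltr_pMr ?lt_min ?e0 ?r0 // ltr1n.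
  have := contra t; rewrite ltr0_norm // (lt_le_trans tm) ?ge_min ?lexx // lt_eqF // => /(_ isT isT).
  have := hr t; rewrite ltr0_norm // (lt_le_trans tm) ?ge_min ?lexx ?orbT // lt_eqF // => /(_ isT isT) ht.
  by rewrite nmulr_rge0 // leNgt ht.
- by move/eqP: L0; rewrite oppr_eq0 mulf_eq0 pnatr_eq0 /= => /eqP.
Qed.

Lemma exists_min (M : set 'rV[R]_d) (y : 'rV[R]_d) : compact M -> M !=set0 ->
  exists2 q, M q & forall q', M q' -> edot (y - q) (y - q) <= edot (y - q') (y - q').
Proof.
move=> cM M0.
have cf : {within M, continuous (fun q => edot (y - q) (y - q))}.
  apply: continuous_subspaceT => x.
  have hb : (fun q : 'rV[R]_d => y - q) @ x --> y - x.
    have hy : (fun _ : 'rV[R]_d => y) @ x --> y. exact: (@cvg_cst _ y _ _ (nbhs_filter x)).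
    have hx : (fun q : 'rV[R]_d => q) @ x --> x by exact: cvg_id.
    have H := cvgB hy hx; exact: H.
  exact: (edot_cvg hb hb).
have [q qM hq] := compact_EVT_min M0 cM cf.
exists q; first by rewrite inE in qM.
by move=> q' Mq'; apply: hq; rewrite inE.
Qed.

Definition injM (M : set 'rV[R]_d) (t : R) := forall p v q w, M p -> normal M p v -> enorm v < t ->
                      M q -> normal M q w -> enorm w < t ->
                      p + v = q + w -> p = q /\ v = w.

Lemma ball_empty (M : set 'rV[R]_d) (tauM : R) p w : 0 < tauM -> injM M tauM -> compact M ->
  M p -> normal M p w -> edot w w < tauM ^+ 2 ->
  forall q, M q -> edot w w <= edot (p + w - q) (p + w - q).
Proof.
move=> t0 inj cM Mp nw ww q Mq.
have [qs Mqs hqs] := @exists_min M (p + w) cM (ex_intro _ p Mp).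
have nqs := @foc M _ _ Mqs hqs.
have e1 : p + w - p = w by rewrite addrC addKr.
have hle := hqs p Mp; rewrite e1 in hle.
have [eqp _] : qs = p /\ (p + w - qs) = w.
  apply: inj => //.
  - by rewrite enorm_lt_sq // (le_lt_trans hle).
  - by rewrite enorm_lt_sq.
  - by rewrite addrC subrK.
have := hqs q Mq; by rewrite eqp e1.
Qed.

Lemma normalZ (M : set 'rV[R]_d) p v a : normal M p v -> normal M p (a *: v).
Proof. by move=> nv w tw; rewrite edotZl nv // mulr0. Qed.

Lemma core (M : set 'rV[R]_d) (tauM tau : R) p v q : 0 < tau -> tau < tauM ->
  injM M tauM -> compact M ->
  M p -> normal M p v -> enorm v < tau -> M q ->
  edot (p - q) (p - q) * ((tauM - tau) / (tauM + tau))
    <= edot (p + v - q) (p + v - q) - edot v v.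
Proof.
move=> t0 ttM inj cM Mp nv vt Mq.
have tM0 : 0 < tauM by apply: lt_trans ttM.
have hc0 : 0 <= (tauM - tau) / (tauM + tau) by apply: divr_ge0; lra.
have hc1 : (tauM - tau) / (tauM + tau) <= 1 by rewrite ler_pdivrMr ?mul1r; lra.
have -> : p + v - q = (p - q) + v by rewrite addrAC.
rewrite [edot (p - q + v) _]edot_sq2 addrK.
have [v0|vn0] := eqVneq v 0.
  have -> : edot (p - q) v = 0 by rewrite v0 -(scale0r (0:'rV[R]_d)) edotZr mul0r.
  rewrite mulr0 addr0.
  by rewrite ler_piMr // edot_ge0.
set s := enorm v.
have s0 : 0 < s.
  rewrite lt_neqAle enorm_ge0 andbT eq_sym; apply/eqP => /(congr1 (fun x => x ^+ 2)).
  by rewrite enorm_sq expr0n /= => /edot_eq0; apply/eqP.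
set r := (tauM + tau) / 2.
have r0 : 0 < r by rewrite divr_gt0 // addr_gt0.
have hw := @ball_empty M tauM p ((r / s) *: v) tM0 inj cM Mp (@normalZ M p v (r / s) nv) _ q Mq.
have hww : edot ((r / s) *: v) ((r / s) *: v) = r ^+ 2.
  rewrite edotZl edotZr -enorm_sq -/s; field; exact: lt0r_neq0.
rewrite hww in hw.
have e2 : p + (r / s) *: v - q = (p - q) + (r / s) *: v by rewrite addrAC.
rewrite e2 edot_sq2 hww edotZr in hw.
have rlt : r ^+ 2 < tauM ^+ 2 by rewrite ltr_pXn2r ?nnegrE ?ltW // /r; lra.
move: (hw rlt).
set X := edot (p - q) (p - q); set Y := edot (p - q) v.
have X0 : 0 <= X by apply: edot_ge0.
move=> H.
have H2 : 0 <= (s / r) * X + 2 * Y.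
  have : 0 <= X + 2 * (r / s * Y) by lra.
  move=> /(mulr_ge0 (divr_ge0 (ltW s0) (ltW r0))).
  have -> : s / r * (X + 2 * (r / s * Y)) = s / r * X + 2 * Y.
    field; apply/andP; split; exact: lt0r_neq0.
  done.
have hk : s / r <= 1 - (tauM - tau) / (tauM + tau).
  rewrite ler_pdivrMr // /r.
  have -> : (1 - (tauM - tau) / (tauM + tau)) * ((tauM + tau) / 2) = tau.
    field; apply: lt0r_neq0; exact: addr_gt0.
  exact: ltW.
nra.
Qed.

End S.

Theorem lemma5 (R : realType) (d k : nat) (M : set 'rV[R]_d)
    (tauM tau eta : R) :
  (k <= d)%N -> C2_submanifold k M -> compact M ->
  is_reach M tauM -> 0 < tauM ->
  0 < tau -> tau < tauM -> 0 < eta ->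
  (((2^-1 * ((tauM - tau) / (tauM + tau)) * eta ^+ 2)%:E <=
    ereal_inf [set ((2^-1)%:E * (dist_set (M `\` eball (nearest M x) eta) x
                                  * dist_set (M `\` eball (nearest M x) eta) x)
                   - (2^-1)%:E * (dist_set M x * dist_set M x))%E
              | x in tube M tau])%E
   /\ 0 < 2^-1 * ((tauM - tau) / (tauM + tau)) * eta ^+ 2).
Proof.
move=> _ _ cM [_ [inj _ _] _] tM0 t0 ttM eta0.
set c := (tauM - tau) / (tauM + tau).
have cpos : 0 < c by rewrite /c; apply: divr_gt0; lra.
have hc0 : 0 <= c by exact: ltW.
split; last first.
  apply: mulr_gt0; last exact: exprn_gt0.
  apply: mulr_gt0 => //; lra.
apply: le_ereal_inf_tmp => z [x [p [v [Mp nv vt ->]]] <-].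
have hcore : forall q, M q -> edot (p - q) (p - q) * c <= edot (p + v - q) (p + v - q) - edot v v :=
  fun q Mq => @core R d M tauM tau p v q t0 ttM inj cM Mp nv vt Mq.
have hv : forall q, M q -> edot v v <= edot (p + v - q) (p + v - q).
  move=> q Mq; have := hcore q Mq; have := mulr_ge0 (@edot_ge0 R d (p - q)) hc0; lra.
have e1 : p + v - p = v by rewrite addrC addKr.
have hnear : nearest M (p + v) = p.
  rewrite /nearest.
  set P := [set p0 | _].
  have hPp : P p.
    split => // q Mq; rewrite e1 enorm_le; exact: hv.
  have [Mq0 hq0] := xgetPex 0 (ex_intro _ p hPp).
  set q0 := xget 0 P in Mq0 hq0 *.
  have nq0 := @foc R d M (p + v) q0 Mq0 (fun q' Mq' => (eqbLR (enorm_le _ _ _ _) (hq0 q' Mq'))).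
  have := hq0 p Mp; rewrite e1 => hle.
  have h1 : enorm (p + v - q0) < tauM by exact: (le_lt_trans hle (lt_trans vt ttM)).
  have h2 : enorm v < tauM by exact: (lt_trans vt ttM).
  have h3 : q0 + (p + v - q0) = p + v by rewrite addrC subrK.
  by have [-> _] := inj q0 (p + v - q0) p v Mq0 nq0 h1 Mp nv h2 h3.
rewrite hnear.
have hdM : dist_set M (p + v) = (enorm v)%:E.
  apply/le_anti/andP; split.
  - by apply: ereal_inf_lbound; exists p => //; rewrite e1.
  - apply: le_ereal_inf_tmp => _ [q Mq <-]; rewrite lee_fin enorm_le; exact: hv.
rewrite hdM.
have [hA|hA] := pselect (exists a, (M `\` eball p eta) a); last first.
  have A0 : M `\` eball p eta = set0.
    by apply/seteqP; split => // a Aa; apply: hA; exists a.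
  rewrite /dist_set A0 image_set0 ereal_inf0 mulyy mulry sgrV gtr0_sg // mul1e.
  rewrite -!EFinM addye ?leey //.
have hlb : forall a, (M `\` eball p eta) a ->
    edot v v + c * eta ^+ 2 <= edot (p + v - a) (p + v - a).
  move=> a [Ma Na]; have := hcore a Ma.
  have : eta ^+ 2 <= edot (p - a) (p - a).
    have : eta <= enorm (a - p) by rewrite leNgt; apply/negP.
    move=> /(lerXn2r 2); rewrite !nnegrE ltW // enorm_ge0 => /(_ isT isT).
    by rewrite enorm_sq -opprB edotNl edotNr opprK.
  move=> h1 h2; have := ler_wpM2l hc0 h1; lra.
set B := Num.sqrt (edot v v + c * eta ^+ 2).
have hB : (B%:E <= dist_set (M `\` eball p eta) (p + v))%E.
  apply: le_ereal_inf_tmp => _ [a Aa <-]; rewrite lee_fin /enorm ler_sqrt ?edot_ge0 //.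
  exact: hlb.
have [a Aa] := hA.
have hU : (dist_set (M `\` eball p eta) (p + v) <= (enorm (p + v - a))%:E)%E.
  by apply: ereal_inf_lbound; exists a.
move: hB hU; case: (dist_set _ _) => [dd| |] hB hU; last first.
- by rewrite leeNy_eq in hB.
- by rewrite leye_eq in hU.
rewrite lee_fin in hB.
rewrite -!EFinM -EFinB lee_fin.
have B0 : 0 <= B by apply: sqrtr_ge0.
have hB2 : B * B = edot v v + c * eta ^+ 2.
  rewrite -expr2 sqr_sqrtr //; apply: addr_ge0; [exact: edot_ge0 | apply: mulr_ge0 => //; exact: sqr_ge0].
have hs2 : enorm v * enorm v = edot v v by rewrite -expr2 enorm_sq.
nra.
Qed.
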